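(* Let $\kappa$ be a regular infinite cardinal. For each $i\in\{a,b\}$ (with $j$ the other player) there is a function $T_i:W^\kappa\to\Delta(W^\kappa,\mathrm{Pow}(W^\kappa))$ such that for all $w^\kappa\in W^\kappa$: (a) $T_i(u^\kappa)=T_i(w^\kappa)$ for all $u^\kappa\in P_i(w^\kappa)$; (b) $T_i(w^\kappa)(P_i(w^\kappa))=1$; (c) $T_i(w^\kappa)([X_0^\kappa=w_0])$ equals $1$ if $w_i^\kappa(0)=1$ and $\tfrac12$ if $w_i^\kappa(0)=0$; (d) for every $\beta<\kappa$, $T_i(w^\kappa)([X_j^\kappa(\beta)=w_j^\kappa(\beta)])$ equals $1$ if $w_i^\kappa(\beta+1)=1$ and $\tfrac12$ if $w_i^\kappa(\beta+1)=0$; (e) for every limit ordinal $\lambda<\kappa$, $T_i(w^\kappa)([\lambda\text{-par}(X_j^\kappa)=\lambda\text{-par}(w_j^\kappa)])$ equals $1$ if $w_i^\kappa(\lambda)=1$ and $\tfrac12$ if $w_i^\kappa(\lambda)=0$; (f) for all $0\le\beta<\alpha<\kappa$, all $u^\kappa,w^\kappa\in W^\kappa$ and all $E^\beta\subseteq W^\beta$: if $u^\kappa\upharpoonright\alpha=w^\kappa\upharpoonright\alpha$ then $T_i(u^\kappa)(\pi_{\beta,\kappa}^{-1}(E^\beta))=T_i(w^\kappa)(\pi_{\beta,\kappa}^{-1}(E^\beta))$.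
   Context: $\Delta(M,\mathrm{Pow}(M))$ is the set of finitely additive probability measures on all subsets of $M$. For an ordinal $\alpha\ge1$, a record of length $\alpha$ is a sequence $r=(r(\beta))_{\beta<\alpha}$ in $\{0,1\}$ such that for every limit ordinal $\lambda\le\alpha$ there is $\gamma<\lambda$ with $r(\beta)=0$ for all $\gamma\le\beta<\lambda$. Parity of ordinals: finite ordinals have the usual parity (0 is even); an infinite ordinal $\gamma=\hat\lambda+n$ ($\hat\lambda$ limit, $n$ finite) is even/odd as $n$ is. For a record $r$ of length $\alpha$ and limit $\lambda\le\alpha$, $o^\lambda(r)$ is the least ordinal $<\lambda$ with $r(\beta)=0$ for all $o^\lambda(r)\le\beta<\lambda$, and $\lambda\text{-par}(r)$ is the parity of $o^\lambda(r)$. $W^0=\{h,t\}$; for $\alpha\ge1$, $W^\alpha$ is the set of triples $w^\alpha=(w_0,w_a^\alpha,w_b^\alpha)$ with $w_0\in\{h,t\}$ and $w_a^\alpha,w_b^\alpha$ records of length $\alpha$. For $0<\beta\le\alpha$, $w^\alpha\upharpoonright\beta=(w_0,w_a^\alpha\upharpoonright\beta,w_b^\alpha\upharpoonright\beta)$ (restricting the sequences), and $w^\alpha\upharpoonright0=w_0$; $\pi_{\beta,\alpha}:W^\alpha\to W^\beta$, $w^\alpha\mapsto w^\alpha\upharpoonright\beta$. For $\alpha>0$, $i\in\{a,b\}$, $j$ the other player: $P_i(w^\alpha)$ is the set of $v^\alpha=(v_0,v_a^\alpha,v_b^\alpha)\in W^\alpha$ with $v_i^\alpha=w_i^\alpha$;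 $w_i^\alpha(0)=1\Rightarrow v_0=w_0$; for all $\beta$ with $\beta+1<\alpha$, $w_i^\alpha(\beta+1)=1\Rightarrow v_j^\alpha(\beta)=w_j^\alpha(\beta)$; for all limit $\lambda<\alpha$, $w_i^\alpha(\lambda)=1\Rightarrow\lambda\text{-par}(v_j^\alpha)=\lambda\text{-par}(w_j^\alpha)$. Notation: $[X_0^\kappa=w_0]=\{u\in W^\kappa:u_0=w_0\}$; $[X_j^\kappa(\beta)=c]=\{u\in W^\kappa:u_j^\kappa(\beta)=c\}$; $[\lambda\text{-par}(X_j^\kappa)=e]=\{u\in W^\kappa:\lambda\text{-par}(u_j^\kappa)=e\}$. *)

(* Defs.v *)
From Stdlib Require Import Reals Classical ClassicalEpsilon.
Set Implicit Arguments.
Open Scope R_scope.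

(* kappa, presented as the well-ordered set of ordinals below it. *)
Record RegCard := {
  ord :> Type;
  olt : ord -> ord -> Prop;
  olt_irrefl : forall x, ~ olt x x;
  olt_trans : forall x y z, olt x y -> olt y z -> olt x z;
  olt_total : forall x y, olt x y \/ x = y \/ olt y x;
  olt_wf : forall S : ord -> Prop, (exists x, S x) ->
             exists m, S m /\ forall y, S y -> ~ olt y m;
  ord_infinite : exists f : nat -> ord, forall m n, f m = f n -> m = n;
  (* kappa is a cardinal (initial ordinal): every beta < kappa has |beta| < kappa *)
  ord_initial : forall x : ord,
      ~ exists f : ord -> {y | olt y x}, forall a b, f a = f b -> a = b;
  (* kappa is regular: every cofinal subset has cardinality kappa *)
  ord_regular : forall S : ord -> Prop,
      (forall x, exists y, S y /\ ~ olt y x) ->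
      exists f : ord -> {y | S y}, forall a b, f a = f b -> a = b
}.

Lemma ord_inhabited (k : RegCard) : inhabited k.
Proof. destruct (ord_infinite k) as [f _]. exact (inhabits (f O)). Qed.

Inductive coin := h | t.
Inductive player := pa | pb.
Definition other (i : player) : player := match i with pa => pb | pb => pa end.

Section Defs.
Variable k : RegCard.

Definition ole (x y : k) : Prop := olt k x y \/ x = y.

Definition is_zero (z : k) : Prop := forall x, ole z x.
Definition ozero : k := epsilon (ord_inhabited k) is_zero.

Definition is_succ (x y : k) : Prop := olt k x y /\ forall z, olt k x z -> ole y z.
(* the successor beta+1 (exists since kappa is a limit ordinal) *)
Definition osucc (x : k) : k := epsilon (inhabits x) (is_succ x).

Definition is_limit (l : k) : Prop := ~ is_zero l /\ ~ exists x, is_succ x l.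

Definition even_ord (g : k) : Prop :=
  exists l n, (is_zero l \/ is_limit l) /\ Nat.iter n osucc l = g /\ Nat.even n = true.

Definition full_record (r : k -> bool) : Prop :=
  (forall l, is_limit l -> exists g, olt k g l /\
       forall b, ole g b -> olt k b l -> r b = false) /\
  (exists g, forall b, ole g b -> r b = false).

Definition record_of (be : k) (r : {x | olt k x be} -> bool) : Prop :=
  forall l, is_limit l -> ole l be -> exists g, olt k g l /\
    forall b (Hb : olt k b be), ole g b -> olt k b l -> r (exist _ b Hb) = false.

Definition lpar_even (r : k -> bool) (l : k) : Prop :=
  exists o, olt k o l /\ (forall b, ole o b -> olt k b l -> r b = false) /\
    (forall o', olt k o' l -> (forall b, ole o' b -> olt k b l -> r b = false) -> ole o o') /\
    even_ord o.

Record Wk := mkWk {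
  w0 : coin; wa : k -> bool; wb : k -> bool;
  wa_rec : full_record wa; wb_rec : full_record wb }.

Definition wpl (i : player) (w : Wk) : k -> bool :=
  match i with pa => wa w | pb => wb w end.

(* W^be for 0 < be < kappa *)
Record Wsub (be : k) := mkWsub {
  s0 : coin; sa : {x | olt k x be} -> bool; sb : {x | olt k x be} -> bool;
  sa_rec : @record_of be sa; sb_rec : @record_of be sb }.

Lemma restr_record (be : k) (r : k -> bool) :
  full_record r -> @record_of be (fun x : {x | olt k x be} => r (proj1_sig x)).
Proof.
  intros [H _] l Hl _. destruct (H l Hl) as [g [Hg1 Hg2]].
  exists g. split; [exact Hg1|]. intros b Hb Hgb Hbl. simpl. exact (Hg2 b Hgb Hbl).
Qed.

(* pi_{be,kappa} : W^kappa -> W^be  (be nonzero) *)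
Definition restr (be : k) (w : Wk) : Wsub be :=
  @mkWsub be (w0 w) (fun x => wa w (proj1_sig x)) (fun x => wb w (proj1_sig x))
    (@restr_record be _ (wa_rec w)) (@restr_record be _ (wb_rec w)).

Definition Pinfo (i : player) (w : Wk) (v : Wk) : Prop :=
  let j := other i in
  wpl i v = wpl i w /\
  (wpl i w ozero = true -> w0 v = w0 w) /\
  (forall be, wpl i w (osucc be) = true -> wpl j v be = wpl j w be) /\
  (forall l, is_limit l -> wpl i w l = true ->
      (lpar_even (wpl j v) l <-> lpar_even (wpl j w) l)).

End Defs.

Definition fa_prob (T : Type) (mu : (T -> Prop) -> R) : Prop :=
  (forall A, 0 <= mu A) /\ mu (fun _ => True) = 1 /\
  (forall A B : T -> Prop, (forall x, A x -> B x -> False) ->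
      mu (fun x => A x \/ B x) = mu A + mu B).

(* Main.v *)
Require Import Defs.
From Stdlib Require Import Reals List Classical ClassicalEpsilon ProofIrrelevance FunctionalExtensionality Bool Lra.

Section Ord.
Variable k : RegCard.
Notation lt := (olt k).
Notation le := (ole k).

Lemma lt_irr x : ~ lt x x. Proof. exact (olt_irrefl k x). Qed.
Lemma ltT x y z : lt x y -> lt y z -> lt x z. Proof. exact (olt_trans k x y z). Qed.
Lemma le_refl x : le x x. Proof. right; reflexivity. Qed.
Lemma le_lt x y z : le x y -> lt y z -> lt x z.
Proof. intros [H|H] H2; [eapply ltT; eauto | subst; auto]. Qed.
Lemma lt_le x y z : lt x y -> le y z -> lt x z.
Proof. intros H [H2|H2]; [eapply ltT; eauto | subst; auto]. Qed.
Lemma leT x y z : le x y -> le y z -> le x z.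
Proof. intros [H|H] H2; [left; eapply lt_le; eauto | subst; auto]. Qed.
Lemma lt_lew x y : lt x y -> le x y. Proof. left; auto. Qed.
Lemma lt_not_le x y : lt x y -> ~ le y x.
Proof. intros H H2. apply (lt_irr x). eapply lt_le; eauto. Qed.
Lemma not_lt_le x y : ~ lt x y -> le y x.
Proof. intros H. destruct (olt_total k x y) as [H1|[H1|H1]]; [tauto|right; auto|left; auto]. Qed.
Lemma not_le_lt x y : ~ le x y -> lt y x.
Proof. intros H. destruct (olt_total k x y) as [H1|[H1|H1]]; [exfalso; apply H; left; auto|exfalso; apply H; right; auto|auto]. Qed.
Lemma le_antisym x y : le x y -> le y x -> x = y.
Proof. intros [H|H] H2; auto. exfalso; eapply lt_not_le; eauto. Qed.

Lemma wf_ind (P : k -> Prop) : (forall x, (forall y, lt y x -> P y) -> P x) -> forall x, P x.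
Proof.
  intros H x. apply NNPP; intro Hn.
  destruct (olt_wf k (fun z => ~ P z)) as [m [Hm Hmin]]. exists x; auto.
  apply Hm, H. intros y Hy. apply NNPP. intro H0. exact (Hmin y H0 Hy).
Qed.

Definition IsLeast (P : k -> Prop) m := P m /\ forall y, P y -> le m y.
Lemma least_ex P : (exists x, P x) -> exists m, IsLeast P m.
Proof.
  intros H. destruct (olt_wf k P H) as [m [Hm Hmin]]. exists m; split; auto.
  intros y Hy. apply not_lt_le. intro. exact (Hmin y Hy H0).
Qed.
Lemma least_unique P Q m n : IsLeast P m -> IsLeast Q n -> (forall x, P x <-> Q x) -> m = n.
Proof.
  intros [Hm Hm'] [Hn Hn'] HPQ. apply le_antisym.
  apply Hm', HPQ, Hn. apply Hn', HPQ, Hm.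
Qed.

Lemma zero_spec : is_zero k (ozero k).
Proof.
  unfold ozero. apply epsilon_spec.
  destruct (least_ex (fun _ => True)) as [m [_ Hm]]. exists (ozero k); auto.
  exists m. intro x. apply Hm; auto.
Qed.

Lemma no_max x : exists y, lt x y.
Proof.
  apply NNPP; intro Hn.
  destruct (ord_regular k (fun y => y = x)) as [f Hf].
  { intros z. exists x. split; auto. intro H. apply Hn. exists z; auto. }
  destruct (ord_infinite k) as [g Hg].
  assert (H01 : f (g 0%nat) = f (g 1%nat)).
  { destruct (f (g 0%nat)) as [a Ha]; destruct (f (g 1%nat)) as [b Hb]. subst.
    f_equal; try apply proof_irrelevance. }
  apply Hf in H01. apply Hg in H01. discriminate.
Qed.

Lemma succ_spec x : is_succ k x (osucc k x).
Proof.
  unfold osucc. apply epsilon_spec.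
  destruct (least_ex (fun z => lt x z) (no_max x)) as [m [Hm Hm']].
  exists m; split; auto.
Qed.
Lemma lt_succ x : lt x (osucc k x). Proof. apply succ_spec. Qed.
Lemma succ_le x z : lt x z -> le (osucc k x) z. Proof. apply succ_spec. Qed.
Lemma lt_succ_le b x : lt b (osucc k x) -> le b x.
Proof. intros H. apply not_lt_le. intro H2. apply succ_le in H2. eapply lt_not_le; eauto. Qed.
Lemma succ_lt_lt x b : lt x b -> lt (osucc k x) b \/ b = osucc k x.
Proof. intros H. destruct (succ_le x b H); auto. Qed.
Lemma succ_lt_limit l x : is_limit k l -> lt x l -> lt (osucc k x) l.
Proof.
  intros [_ Hl] H. destruct (succ_le x l H) as [H1|H1]; auto.
  exfalso. apply Hl. exists x. rewrite <- H1. apply succ_spec.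
Qed.
Lemma is_succ_eq x g : is_succ k x g -> g = osucc k x.
Proof.
  intros [H1 H2]. apply le_antisym. apply H2, lt_succ. apply succ_le; auto.
Qed.
Lemma succ_mono x y : lt x y -> lt (osucc k x) (osucc k y).
Proof. intros H. eapply le_lt. apply succ_le; eauto. apply lt_succ. Qed.
Lemma succ_inj x y : osucc k x = osucc k y -> x = y.
Proof.
  intros H. destruct (olt_total k x y) as [H1|[H1|H1]]; auto;
  apply succ_mono in H1; rewrite H in H1; exfalso; eapply lt_irr; eauto.
Qed.

Definition zl (l : k) := is_zero k l \/ is_limit k l.

Lemma decomp g : exists l n, zl l /\ Nat.iter n (osucc k) l = g.
Proof.
  induction g as [g IH] using wf_ind.
  destruct (classic (zl g)) as [Hz|Hz]. exists g, 0%nat; auto.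
  assert (exists x, is_succ k x g) as [x Hx].
  { apply NNPP; intro Hn. apply Hz. right. split; auto. intro. apply Hz. left; auto. }
  destruct (IH x (proj1 Hx)) as [l [n [Hl Hn]]].
  exists l, (S n). split; auto. simpl. rewrite Hn. symmetry. apply is_succ_eq; auto.
Qed.

Lemma iter_succ_not_zl n l : ~ zl (osucc k (Nat.iter n (osucc k) l)).
Proof.
  intros [H|H].
  - apply (lt_not_le _ _ (lt_succ (Nat.iter n (osucc k) l))). apply H.
  - apply (proj2 H). eexists. apply succ_spec.
Qed.

Lemma decomp_unique n m l l' : zl l -> zl l' ->
  Nat.iter n (osucc k) l = Nat.iter m (osucc k) l' -> n = m.
Proof.
  intros Hl Hl'. revert m. induction n as [|n IH]; intros [|m] H; simpl in H; auto.
  - exfalso. subst. eapply iter_succ_not_zl; eauto.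
  - exfalso. rewrite <- H in Hl'. eapply iter_succ_not_zl; eauto.
  - f_equal. apply IH. apply succ_inj; auto.
Qed.

Lemma even_succ g : even_ord k (osucc k g) <-> ~ even_ord k g.
Proof.
  split.
  - intros [l [n [Hl [Hn He]]]] [l' [m [Hl' [Hm Hem]]]].
    assert (Nat.iter n (osucc k) l = Nat.iter (S m) (osucc k) l') by (simpl; congruence).
    apply decomp_unique in H; auto. subst n.
    rewrite Nat.even_succ, <- Nat.negb_even, Hem in He. discriminate.
  - intros H. destruct (decomp g) as [l [n [Hl Hn]]].
    exists l, (S n). split; [|split]; auto. simpl; congruence.
    rewrite Nat.even_succ, <- Nat.negb_even.
    destruct (Nat.even n) eqn:E; auto. exfalso; apply H. exists l, n; auto.
Qed.

Lemma lpar_last r l g : is_limit k l -> lt g l -> r g = true ->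
  (forall b, lt g b -> lt b l -> r b = false) ->
  (lpar_even k r l <-> even_ord k (osucc k g)).
Proof.
  intros Hl Hg Hr Hz.
  assert (Hs : lt (osucc k g) l) by (apply succ_lt_limit; auto).
  assert (Ht : forall b, le (osucc k g) b -> lt b l -> r b = false).
  { intros b Hb Hbl. apply Hz; auto. eapply lt_le; [apply lt_succ|]; auto. }
  assert (Hmin : forall o', lt o' l -> (forall b, le o' b -> lt b l -> r b = false) -> le (osucc k g) o').
  { intros o' Ho' H. apply succ_le. apply not_le_lt. intro Hle.
    rewrite (H g Hle Hg) in Hr. discriminate. }
  split.
  - intros [o [Ho1 [Ho2 [Ho3 Ho4]]]].
    assert (o = osucc k g) as -> ; auto.
    apply le_antisym; auto.
  - intros He. exists (osucc k g). repeat split; auto.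
Qed.

End Ord.


Definition tb (P : Prop) : bool := if excluded_middle_informative P then true else false.
Lemma tb_true P : tb P = true <-> P.
Proof. unfold tb; destruct (excluded_middle_informative P); split; intros; auto; try discriminate; tauto. Qed.
Lemma tb_false P : ~ P -> tb P = false.
Proof. unfold tb; destruct (excluded_middle_informative P); tauto. Qed.
Lemma tb_ext P Q : (P <-> Q) -> tb P = tb Q.
Proof. intros H. unfold tb; destruct (excluded_middle_informative P); destruct (excluded_middle_informative Q); tauto. Qed.

Section Cons.
Variable k : RegCard.
Notation lt := (olt k).
Notation le := (ole k).
Notation sc := (osucc k).

Definition Sset (Wi : k -> bool) (d : list k) (l s : k) : Prop := (Wi s = true \/ In s d) /\ lt s l.
Definition gcand Wi d l g : Prop := lt g l /\ forall s, Sset Wi d l s -> lt s g.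
Definition gam Wi d l : k := epsilon (inhabits (ozero k)) (IsLeast k (gcand Wi d l)).
Definition rel (Wi : k -> bool) d l := is_limit k l /\ (Wi l = true \/ In l d).
Definition gw Wi d (F : k -> Prop) p l := rel Wi d l /\ (p = gam Wi d l \/ (p = sc (gam Wi d l) /\ F l)).
Definition gpos Wi d F p := exists l, gw Wi d F p l.
Definition gfun (Wi Wj : k -> bool) d F (e : bool) p :=
  tb ((Wi (sc p) = true /\ Wj p = true) \/ gpos Wi d F p \/ (e = true /\ Wi (sc p) = false /\ In p d)).

Lemma bound_list (l : list k) g : exists G, le g G /\ forall e, In e l -> lt e G.
Proof.
  induction l as [|a l IH]. exists g; split; [apply le_refl|intros e []].
  destruct IH as [G [H1 H2]].
  destruct (classic (lt a G)) as [Ha|Ha].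
  - exists G; split; auto. intros e [<-|He]; auto.
  - apply not_lt_le in Ha. exists (sc a). split.
    + apply (leT k _ a); [eapply leT; eauto|apply lt_lew, lt_succ].
    + intros e [<-|He]. apply lt_succ. eapply lt_le. apply H2; auto. apply (leT k _ a); [auto|apply lt_lew, lt_succ].
Qed.

Lemma bound_list_lim lam (Hl : is_limit k lam) (l : list k) g : lt g lam ->
  exists G, lt G lam /\ le g G /\ forall e, In e l -> lt e lam -> lt e G.
Proof.
  intros Hg. induction l as [|a l IH]. exists g; split; auto; split; [apply le_refl|intros e []].
  destruct IH as [G [H0 [H1 H2]]].
  destruct (classic (lt a G)) as [Ha|Ha].
  - exists G; split; auto; split; auto. intros e [<-|He]; auto.
  - destruct (classic (lt a lam)) as [Hal|Hal].
    + apply not_lt_le in Ha. exists (sc a). split; [apply succ_lt_limit; auto|split].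
      * apply (leT k _ a); [eapply leT; eauto|apply lt_lew, lt_succ].
      * intros e [<-|He] Hel. apply lt_succ. eapply lt_le. apply H2; auto. apply (leT k _ a); [auto|apply lt_lew, lt_succ].
    + exists G; split; auto; split; auto. intros e [<-|He] Hel; [tauto|auto].
Qed.

Lemma succ_le_mono x y : le x y -> le (sc x) (sc y).
Proof. intros [H|H]. left; apply succ_mono; auto. subst; apply le_refl. Qed.

Section Fix.
Variables (Wi : k -> bool) (d : list k).
Hypothesis HWi : full_record k Wi.

Lemma gam_spec l : is_limit k l -> IsLeast k (gcand Wi d l) (gam Wi d l).
Proof.
  intros Hl. unfold gam. apply epsilon_spec. apply least_ex.
  destruct (proj1 HWi l Hl) as [g0 [Hg0 Hz]].
  destruct (bound_list_lim l Hl d g0 Hg0) as [G [HG1 [HG2 HG3]]].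
  exists G. split; auto. intros s [[Hs|Hs] Hsl].
  - destruct (classic (le g0 s)) as [Hle|Hle]. rewrite Hz in Hs; auto; discriminate.
    apply not_le_lt in Hle. eapply lt_le; eauto.
  - auto.
Qed.

Lemma gam_lt l : is_limit k l -> lt (gam Wi d l) l.
Proof. intros Hl. apply (gam_spec l Hl). Qed.
Lemma S_below l s : is_limit k l -> Sset Wi d l s -> lt s (gam Wi d l).
Proof. intros Hl Hs. apply (gam_spec l Hl); auto. Qed.

Lemma L5' l p : is_limit k l -> le (gam Wi d l) p -> lt (sc p) l -> Wi (sc p) = true -> False.
Proof.
  intros Hl H1 H2 H3. assert (Hs : lt (sc p) (gam Wi d l)) by (apply S_below; auto; split; auto).
  apply (lt_irr k p). eapply ltT. apply lt_succ. eapply lt_le; eauto.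
Qed.
Lemma L6' l p : is_limit k l -> le (gam Wi d l) p -> lt p l -> In p d -> False.
Proof.
  intros Hl H1 H2 H3. assert (Hs : lt p (gam Wi d l)) by (apply S_below; auto; split; auto).
  apply (lt_irr k p). eapply lt_le; eauto.
Qed.

Lemma L1 F p l : gw Wi d F p l -> le (gam Wi d l) p /\ lt (sc p) l /\ lt p l.
Proof.
  intros [[Hl _] Hp]. pose proof (gam_lt l Hl) as Hg.
  assert (lt (sc (gam Wi d l)) l) by (apply succ_lt_limit; auto).
  assert (lt (sc (sc (gam Wi d l))) l) by (apply succ_lt_limit; auto).
  destruct Hp as [->|[-> _]].
  - split; [apply le_refl|split; auto].
  - split; [apply lt_lew, lt_succ|split; auto].
Qed.

Lemma L5 F p l : gw Wi d F p l -> Wi (sc p) = true -> False.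
Proof. intros H. destruct (L1 F p l H) as [A [B C]]. eapply L5'; eauto. apply H. Qed.
Lemma L6 F p l : gw Wi d F p l -> In p d -> False.
Proof. intros H. destruct (L1 F p l H) as [A [B C]]. eapply L6'; eauto. apply H. Qed.

Lemma rel_S l l' : rel Wi d l -> lt l l' -> Sset Wi d l' l.
Proof. intros [_ H] H2. split; auto. Qed.

Lemma L7 F p l l' : rel Wi d l -> gw Wi d F p l' -> le (gam Wi d l) p -> lt p l -> l' = l.
Proof.
  intros Hr Hw Hle Hpl. destruct (L1 F p l' Hw) as [A [B C]].
  destruct (olt_total k l' l) as [H|[H|H]]; auto; exfalso.
  - assert (lt l' (gam Wi d l)) by (apply S_below; [apply Hr| apply rel_S; auto; apply Hw]).
    apply (lt_irr k p). apply (ltT k _ l'); auto. apply (lt_le k _ (gam Wi d l)); auto.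
  - assert (lt l (gam Wi d l')) by (apply S_below; [apply Hw| apply rel_S; auto]).
    apply (lt_irr k p). apply (ltT k _ l); auto. apply (lt_le k _ (gam Wi d l')); auto.
Qed.

Lemma L3 Wj F e l b : is_limit k l -> lt (sc (gam Wi d l)) b -> lt b l -> gfun Wi Wj d F e b = false.
Proof.
  intros Hl Hb Hbl. pose proof (gam_lt l Hl) as Hg.
  assert (Hgb : lt (gam Wi d l) b) by (eapply ltT; [apply lt_succ|eauto]).
  apply tb_false. intros [[K _]|[[l' Hw]|[_ [_ Hd]]]].
  - apply (L5' l b Hl (lt_lew _ _ _ Hgb) (succ_lt_limit k l b Hl Hbl) K).
  - destruct (L1 F b l' Hw) as [A [B C]].
    destruct (olt_total k l' l) as [H|[H|H]].
    + assert (lt l' (gam Wi d l)) by (apply S_below; auto; apply rel_S; auto; apply Hw).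
      apply (lt_irr k b). apply (ltT k _ l'); auto. apply (ltT k _ (gam Wi d l)); auto.
    + subst l'. destruct Hw as [_ [->|[-> _]]].
      * apply (lt_irr k (gam Wi d l)); auto.
      * apply (lt_irr k _ Hb).
    + assert (Hm : le (gam Wi d l') (gam Wi d l)).
      { apply (gam_spec l' (proj1 (proj1 Hw))). split. apply (ltT k _ l); auto.
        intros s [Hs Hsl]. destruct (classic (lt s l)) as [H1|H1].
        apply S_below; auto; split; auto.
        apply not_lt_le in H1. exfalso.
        assert (lt s (gam Wi d l')) by (apply S_below; [apply Hw|split; auto]).
        apply (lt_irr k s). apply (lt_le k _ (gam Wi d l')); auto. apply (leT k _ b); auto.
        apply lt_lew. apply (lt_le k _ l); auto. }
      destruct Hw as [_ [->|[-> _]]].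
      * apply (lt_irr k (gam Wi d l')). apply (le_lt k _ (gam Wi d l)); auto.
      * apply (lt_irr k (sc (gam Wi d l'))). apply (le_lt k _ (sc (gam Wi d l))); [apply succ_le_mono; auto| auto].
  - apply (L6' l b Hl (lt_lew _ _ _ Hgb) Hbl Hd).
Qed.

Lemma L4 Wj F e : exists G, forall b, le G b -> gfun Wi Wj d F e b = false.
Proof.
  destruct (proj2 HWi) as [g1 Hg1]. destruct (bound_list d g1) as [G [HG1 HG2]].
  exists G. intros b Hb. apply tb_false. intros [[K _]|[[l' Hw]|[_ [_ Hd]]]].
  - rewrite Hg1 in K. discriminate. eapply leT. eapply leT; eauto. apply lt_lew, lt_succ.
  - destruct (L1 F b l' Hw) as [A [B C]].
    assert (lt l' G).
    { destruct Hw as [[_ [H|H]] _]; auto.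
      destruct (classic (le g1 l')) as [H1|H1]. rewrite Hg1 in H; auto; discriminate.
      apply not_le_lt in H1. eapply lt_le; eauto. }
    apply (lt_irr k b). eapply ltT; eauto. eapply lt_le; eauto.
  - apply (lt_irr k b). eapply lt_le; eauto.
Qed.

Lemma gfun_rec Wj F e : full_record k (gfun Wi Wj d F e).
Proof.
  split.
  - intros l Hl. exists (sc (sc (gam Wi d l))). split.
    apply succ_lt_limit; auto. apply succ_lt_limit; auto. apply gam_lt; auto.
    intros b Hb Hbl. eapply L3; eauto. eapply lt_le; [apply lt_succ|auto].
  - apply L4.
Qed.

Lemma V1 Wj F e l : rel Wi d l -> gfun Wi Wj d F e (gam Wi d l) = true.
Proof. intros Hr. apply tb_true. right; left. exists l. split; auto. Qed.

Lemma V2 Wj F e l : rel Wi d l -> (gfun Wi Wj d F e (sc (gam Wi d l)) = true <-> F l).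
Proof.
  intros Hr. pose proof (gam_lt l (proj1 Hr)).
  assert (lt (sc (gam Wi d l)) l) by (apply succ_lt_limit; auto; apply Hr).
  assert (lt (sc (sc (gam Wi d l))) l) by (apply succ_lt_limit; auto; apply Hr).
  unfold gfun; rewrite tb_true. split.
  - intros [[K _]|[[l' Hw]|[_ [_ Hd]]]].
    + exfalso. apply (L5' l (sc (gam Wi d l)) (proj1 Hr) (lt_lew _ _ _ (lt_succ k _)) H1 K).
    + assert (l' = l) by (eapply L7; eauto; apply lt_lew, lt_succ). subst l'.
      destruct Hw as [_ [Hq|[_ Hq]]]; auto. exfalso. apply (lt_irr k (gam Wi d l)).
      rewrite <- Hq at 2. apply lt_succ.
    + exfalso. apply (L6' l _ (proj1 Hr) (lt_lew _ _ _ (lt_succ k _)) H0 Hd).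
  - intros HF. right; left. exists l. split; auto.
Qed.

Lemma Vpar Wj F e l : rel Wi d l ->
  (lpar_even k (gfun Wi Wj d F e) l <->
   (F l /\ even_ord k (sc (sc (gam Wi d l)))) \/ (~ F l /\ even_ord k (sc (gam Wi d l)))).
Proof.
  intros Hr. pose proof (gam_lt l (proj1 Hr)) as Hg. destruct Hr as [Hl Hr'].
  assert (lt (sc (gam Wi d l)) l) by (apply succ_lt_limit; auto).
  destruct (classic (F l)) as [HF|HF].
  - rewrite (lpar_last k _ l (sc (gam Wi d l))); auto.
    + tauto.
    + apply V2; auto. split; auto.
    + intros b Hb Hbl. eapply L3; eauto.
  - rewrite (lpar_last k _ l (gam Wi d l)); auto.
    + tauto.
    + apply V1; split; auto.
    + intros b Hb Hbl. destruct (succ_lt_lt k _ _ Hb) as [H1|H1].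
      eapply L3; eauto. subst b.
      destruct (gfun Wi Wj d F e (sc (gam Wi d l))) eqn:E; auto.
      exfalso. apply HF. apply (V2 Wj F e l); auto. split; auto.
Qed.

Lemma Vknown Wj F e p : Wi (sc p) = true -> gfun Wi Wj d F e p = Wj p.
Proof.
  intros Hk. destruct (Wj p) eqn:E.
  - apply tb_true. left; auto.
  - apply tb_false. intros [[_ H]|[[l' Hw]|[_ [H _]]]]. congruence.
    eapply L5; eauto. congruence.
Qed.

Lemma Vind Wj F e p : In p d -> Wi (sc p) = false -> gfun Wi Wj d F e p = e.
Proof.
  intros Hd Hk. destruct e.
  - apply tb_true. right; right; auto.
  - apply tb_false. intros [[H _]|[[l' Hw]|[H _]]]. congruence. eapply L6; eauto. discriminate.
Qed.

End Fix.

Lemma gam_local Wi Wi' d l : full_record k Wi -> full_record k Wi' -> is_limit k l ->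
  (forall s, lt s l -> Wi s = Wi' s) -> gam Wi d l = gam Wi' d l.
Proof.
  intros H1 H2 Hl Heq. eapply least_unique. apply gam_spec; auto. apply gam_spec; auto.
  intros g. unfold gcand, Sset. split; intros [A B]; split; auto; intros s [C D]; apply B; split; auto.
  rewrite (Heq s D); auto. rewrite <- (Heq s D); auto.
Qed.

Lemma gpos_local Wi Wi' d F F' be p : full_record k Wi -> In be d -> lt p be ->
  (forall l, le l be -> is_limit k l -> Wi l = Wi' l /\ gam Wi d l = gam Wi' d l /\ (F l <-> F' l)) ->
  gpos Wi d F p -> gpos Wi' d F' p.
Proof.
  intros HW Hbe Hp Hloc [l Hw].
  destruct (L1 Wi d HW F p l Hw) as [A [B C]].
  assert (Hle : le l be).
  { apply not_lt_le. intro H. assert (lt be (gam Wi d l)) by (apply (S_below Wi d HW l be (proj1 (proj1 Hw))); split; auto).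
    apply (lt_irr k p). apply (ltT k _ be); auto. apply (lt_le k _ (gam Wi d l)); auto. }
  destruct Hw as [[Hl Hr] Hp'].
  destruct (Hloc l Hle Hl) as [E1 [E2 E3]].
  exists l. split. split; auto. rewrite <- E1; auto. rewrite <- E2. tauto.
Qed.

Lemma lpar_local r r' l : (forall b, lt b l -> r b = r' b) -> (lpar_even k r l <-> lpar_even k r' l).
Proof.
  intros H.
  assert (E : forall o, (forall b, le o b -> lt b l -> r b = false) <-> (forall b, le o b -> lt b l -> r' b = false)).
  { intros o; split; intros Ho b Hb Hbl.
    rewrite <- (H b Hbl); apply Ho; auto. rewrite (H b Hbl); apply Ho; auto. }
  unfold lpar_even. split; intros [o [A [B [C D]]]]; exists o;
  (split; [auto|split; [apply E; auto|split; [|auto]]]); intros o' Ho' Ho''; apply C; auto; apply E; auto.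
Qed.

End Cons.

Open Scope R_scope.

Section Main.
Variable k : RegCard.
Variable i : player.
Variable U : (list k -> Prop) -> Prop.
Hypothesis UI : forall P Q, U P -> U Q -> U (fun d => P d /\ Q d).
Hypothesis US : forall P Q : list k -> Prop, (forall d, P d -> Q d) -> U P -> U Q.
Hypothesis U0 : ~ U (fun _ => False).
Hypothesis Uu : forall P, U P \/ U (fun d => ~ P d).
Hypothesis Uin : forall x, U (fun d => In x d).

Notation lt := (olt k).
Notation le := (ole k).
Notation sc := (osucc k).

Definition I (P : list k -> Prop) : R := if excluded_middle_informative (U P) then 1 else 0.

Lemma UT : U (fun _ => True).
Proof. destruct (Uu (fun _ => False)) as [H|H]. tauto. eapply US; [|exact H]. auto. Qed.

Lemma I_true P : (forall d, P d) -> I P = 1.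
Proof. intros H. unfold I. destruct (excluded_middle_informative (U P)) as [_|n]; auto.
  exfalso; apply n. eapply US; [|exact UT]. auto. Qed.
Lemma I_false P : (forall d, ~ P d) -> I P = 0.
Proof. intros H. unfold I. destruct (excluded_middle_informative (U P)) as [u|_]; auto.
  exfalso; apply U0. eapply US; [|exact u]. auto. Qed.
Lemma I_01 P : I P = 0 \/ I P = 1.
Proof. unfold I. destruct (excluded_middle_informative (U P)); auto. Qed.
Lemma I_compl Q P1 P2 : U Q -> (forall d, Q d -> (P2 d <-> ~ P1 d)) -> I P1 + I P2 = 1.
Proof.
  intros HQ H. unfold I.
  destruct (excluded_middle_informative (U P1)) as [u1|n1];
  destruct (excluded_middle_informative (U P2)) as [u2|n2].
  - exfalso. apply U0. eapply US; [|apply (UI _ _ (UI _ _ u1 u2) HQ)]. simpl. intros d [[A B] C].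
    apply (H d C); auto.
  - lra.
  - lra.
  - exfalso. destruct (Uu P1) as [u|u]. tauto. apply n2. eapply US; [|apply (UI _ _ u HQ)].
    intros d [A B]. apply (H d B); auto.
Qed.
Lemma I_congr Q P1 P2 : U Q -> (forall d, Q d -> (P1 d <-> P2 d)) -> I P1 = I P2.
Proof.
  intros HQ H. unfold I.
  destruct (excluded_middle_informative (U P1)) as [u1|n1];
  destruct (excluded_middle_informative (U P2)) as [u2|n2]; auto; exfalso.
  - apply n2. eapply US; [|apply (UI _ _ u1 HQ)]. intros d [A B]. apply (H d B); auto.
  - apply n1. eapply US; [|apply (UI _ _ u2 HQ)]. intros d [A B]. apply (H d B); auto.
Qed.
Lemma I_add P1 P2 : (forall d, P1 d -> P2 d -> False) -> I (fun d => P1 d \/ P2 d) = I P1 + I P2.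
Proof.
  intros H. unfold I.
  destruct (excluded_middle_informative (U (fun d => P1 d \/ P2 d))) as [u|n];
  destruct (excluded_middle_informative (U P1)) as [u1|n1];
  destruct (excluded_middle_informative (U P2)) as [u2|n2]; try lra; exfalso.
  - apply U0. eapply US; [|apply (UI _ _ u1 u2)]. intros d [A B]; eauto.
  - destruct (Uu P1) as [v1|v1]; [tauto|]. destruct (Uu P2) as [v2|v2]; [tauto|].
    apply U0. eapply US; [|apply (UI _ _ u (UI _ _ v1 v2))]. intros d [A [B C]]; tauto.
  - apply n; eapply US; [|exact u1]; auto.
  - apply n; eapply US; [|exact u1]; auto.
  - apply n; eapply US; [|exact u2]; auto.
Qed.

Lemma player_cases (p : player) : p = i \/ p = other i.
Proof. destruct p, i; simpl; auto. Qed.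

Definition wrec (p : player) (w : Wk k) : full_record k (wpl p w) :=
  match p as p0 return full_record k (wpl p0 w) with pa => wa_rec w | pb => wb_rec w end.

Definition build (c : coin) (ri rj : k -> bool) (Hi : full_record k ri) (Hj : full_record k rj) : Wk k :=
  match i with pa => @mkWk k c ri rj Hi Hj | pb => @mkWk k c rj ri Hj Hi end.

Lemma build_i c ri rj Hi Hj : wpl i (build c ri rj Hi Hj) = ri.
Proof. unfold build; destruct i; reflexivity. Qed.
Lemma build_j c ri rj Hi Hj : wpl (other i) (build c ri rj Hi Hj) = rj.
Proof. unfold build; destruct i; reflexivity. Qed.
Lemma build_0 c ri rj Hi Hj : w0 (build c ri rj Hi Hj) = c.
Proof. unfold build; destruct i; reflexivity. Qed.
Lemma build_ext c c' ri ri' rj rj' Hi Hi' Hj Hj' : c = c' -> ri = ri' -> rj = rj' ->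
  build c ri rj Hi Hj = build c' ri' rj' Hi' Hj'.
Proof. intros; subst. rewrite (proof_irrelevance _ Hi Hi'), (proof_irrelevance _ Hj Hj'). reflexivity. Qed.

Definition flagx (Wi Wj : k -> bool) d l : Prop :=
  is_limit k l /\ Wi l = true /\ ~ (even_ord k (sc (gam k Wi d l)) <-> lpar_even k Wj l).
Definition flagy (Wi Wj : k -> bool) d l : Prop := flagx Wi Wj d l \/ (Wi l = false /\ In l d).

Definition X (w : Wk k) (d : list k) : Wk k :=
  build (if wpl i w (ozero k) then w0 w else h) (wpl i w)
    (gfun k (wpl i w) (wpl (other i) w) d (flagx (wpl i w) (wpl (other i) w) d) false)
    (wrec i w) (gfun_rec k (wpl i w) d (wrec i w) _ _ _).
Definition Y (w : Wk k) (d : list k) : Wk k :=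
  build (if wpl i w (ozero k) then w0 w else t) (wpl i w)
    (gfun k (wpl i w) (wpl (other i) w) d (flagy (wpl i w) (wpl (other i) w) d) true)
    (wrec i w) (gfun_rec k (wpl i w) d (wrec i w) _ _ _).

Definition T (w : Wk k) (A : Wk k -> Prop) : R :=
  / 2 * I (fun d => A (X w d)) + / 2 * I (fun d => A (Y w d)).


Lemma gfun_ext Wi Wj Wj' d F F' e : (forall p, Wi (sc p) = true -> Wj p = Wj' p) -> (forall l, F l <-> F' l) ->
  forall p, gfun k Wi Wj d F e p = gfun k Wi Wj' d F' e p.
Proof.
  intros H1 H2 p. unfold gfun. apply tb_ext.
  assert (Hg : gpos k Wi d F p <-> gpos k Wi d F' p).
  { unfold gpos, gw. split; intros [l [A B]]; exists l; split; auto; rewrite ?H2 in *; firstorder. }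
  assert (HK : (Wi (sc p) = true /\ Wj p = true) <-> (Wi (sc p) = true /\ Wj' p = true)).
  { split; intros [A B]; split; auto; [rewrite <- H1 | rewrite H1]; auto. }
  tauto.
Qed.

Lemma P_unf w u : Pinfo i w u ->
  wpl i u = wpl i w /\ (wpl i w (ozero k) = true -> w0 u = w0 w) /\
  (forall be, wpl i w (sc be) = true -> wpl (other i) u be = wpl (other i) w be) /\
  (forall l, is_limit k l -> wpl i w l = true ->
      (lpar_even k (wpl (other i) u) l <-> lpar_even k (wpl (other i) w) l)).
Proof. unfold Pinfo. cbv zeta. auto. Qed.

Lemma X_inv w u d : Pinfo i w u -> X u d = X w d.
Proof.
  intros HP. destruct (P_unf w u HP) as [H1 [H2 [H3 H4]]]. unfold X. apply build_ext.
  - rewrite H1. destruct (wpl i w (ozero k)) eqn:E; auto.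
  - auto.
  - apply functional_extensionality. rewrite H1. apply gfun_ext; auto.
    intros l. unfold flagx. split; intros [A [B C]]; split; auto; split; auto.
    rewrite (H4 l A B) in C; auto. rewrite <- (H4 l A B) in C; auto.
Qed.

Lemma Y_inv w u d : Pinfo i w u -> Y u d = Y w d.
Proof.
  intros HP. destruct (P_unf w u HP) as [H1 [H2 [H3 H4]]]. unfold Y. apply build_ext.
  - rewrite H1. destruct (wpl i w (ozero k)) eqn:E; auto.
  - auto.
  - apply functional_extensionality. rewrite H1. apply gfun_ext; auto.
    intros l. unfold flagy, flagx.
    split; (intros [[A [B C]]|D]; [left; split; auto; split; auto| right; auto]).
    rewrite (H4 l A B) in C; auto. rewrite <- (H4 l A B) in C; auto.
Qed.

Lemma par_known F (Wi Wj : k -> bool) d l : full_record k Wi -> is_limit k l -> Wi l = true ->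
  (F l <-> flagx Wi Wj d l) ->
  (lpar_even k (gfun k Wi Wj d F false) l <-> lpar_even k Wj l) /\
  (lpar_even k (gfun k Wi Wj d F true) l <-> lpar_even k Wj l).
Proof.
  intros HW Hl Hil HF.
  assert (Hr : rel k Wi d l) by (split; auto).
  rewrite (Vpar k Wi d HW Wj F false l Hr), (Vpar k Wi d HW Wj F true l Hr), HF.
  rewrite (even_succ k (sc (gam k Wi d l))). unfold flagx.
  destruct (classic (even_ord k (sc (gam k Wi d l)))); destruct (classic (lpar_even k Wj l)); tauto.
Qed.

Lemma X_P w d : Pinfo i w (X w d).
Proof.
  unfold Pinfo; cbv zeta. unfold X. rewrite build_i, build_j, build_0.
  split; [reflexivity|]. split. intros H; rewrite H; reflexivity.
  split. intros be Hbe. apply (Vknown k _ d (wrec i w)); auto.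
  intros l Hl Hil. apply (par_known (flagx (wpl i w) (wpl (other i) w) d) _ _ d l (wrec i w) Hl Hil). tauto.
Qed.

Lemma Y_P w d : Pinfo i w (Y w d).
Proof.
  unfold Pinfo; cbv zeta. unfold Y. rewrite build_i, build_j, build_0.
  split; [reflexivity|]. split. intros H; rewrite H; reflexivity.
  split. intros be Hbe. apply (Vknown k _ d (wrec i w)); auto.
  intros l Hl Hil. apply (par_known (flagy (wpl i w) (wpl (other i) w) d) _ _ d l (wrec i w) Hl Hil).
  unfold flagy. split; [intros [A|[A B]]; auto; congruence|auto].
Qed.

Lemma X_0 w d : w0 (X w d) = if wpl i w (ozero k) then w0 w else h.
Proof. unfold X; apply build_0. Qed.
Lemma Y_0 w d : w0 (Y w d) = if wpl i w (ozero k) then w0 w else t.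
Proof. unfold Y; apply build_0. Qed.
Lemma X_i w d : wpl i (X w d) = wpl i w.
Proof. unfold X; apply build_i. Qed.
Lemma Y_i w d : wpl i (Y w d) = wpl i w.
Proof. unfold Y; apply build_i. Qed.
Lemma X_j w d : wpl (other i) (X w d) = gfun k (wpl i w) (wpl (other i) w) d (flagx (wpl i w) (wpl (other i) w) d) false.
Proof. unfold X; apply build_j. Qed.
Lemma Y_j w d : wpl (other i) (Y w d) = gfun k (wpl i w) (wpl (other i) w) d (flagy (wpl i w) (wpl (other i) w) d) true.
Proof. unfold Y; apply build_j. Qed.

Lemma restr_eq al u w : restr al u = restr al w -> w0 u = w0 w /\ forall p x, lt x al -> wpl p u x = wpl p w x.
Proof.
  intros H. split. exact (f_equal (@s0 k al) H).
  intros p x Hx. destruct p.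
  - pose proof (f_equal (@sa k al) H) as H'. simpl in H'. exact (f_equal (fun f => f (exist _ x Hx)) H').
  - pose proof (f_equal (@sb k al) H) as H'. simpl in H'. exact (f_equal (fun f => f (exist _ x Hx)) H').
Qed.

Lemma mkWsub_ext be c c' a a' b b' Ha Ha' Hb Hb' : c = c' -> a = a' -> b = b' ->
  @mkWsub k be c a b Ha Hb = @mkWsub k be c' a' b' Ha' Hb'.
Proof. intros; subst. rewrite (proof_irrelevance _ Ha Ha'), (proof_irrelevance _ Hb Hb'). reflexivity. Qed.

Lemma restr_ext be x y : w0 x = w0 y -> (forall p b, lt b be -> wpl p x b = wpl p y b) -> restr be x = restr be y.
Proof.
  intros H0 H. unfold restr. apply mkWsub_ext; auto; apply functional_extensionality; intros [z Hz]; simpl.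
  exact (H pa z Hz). exact (H pb z Hz).
Qed.

Lemma gfun_local Wi Wi' Wj Wj' d F F' e al be b : full_record k Wi -> full_record k Wi' ->
  (forall x, lt x al -> Wi x = Wi' x /\ Wj x = Wj' x) -> lt be al -> In be d -> lt b be ->
  (forall l, le l be -> is_limit k l -> (F l <-> F' l)) ->
  gfun k Wi Wj d F e b = gfun k Wi' Wj' d F' e b.
Proof.
  intros H1 H2 Hag Hbe Hd Hb HF. unfold gfun. apply tb_ext.
  assert (Hsb : lt (sc b) al) by (apply (le_lt k _ be); auto; apply succ_le; auto).
  assert (Hba : lt b al) by (apply (ltT k _ be); auto).
  assert (Hloc : forall l, le l be -> is_limit k l -> Wi l = Wi' l /\ gam k Wi d l = gam k Wi' d l /\ (F l <-> F' l)).
  { intros l Hl Hll. assert (lt l al) by (apply (le_lt k _ be); auto).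
    split; [apply Hag; auto|split; [|auto]]. apply gam_local; auto.
    intros s Hs. apply Hag. apply (ltT k _ l); auto. }
  assert (Hg : gpos k Wi d F b <-> gpos k Wi' d F' b).
  { split; apply gpos_local with be; auto. intros l Hl Hll. destruct (Hloc l Hl Hll) as [A [B C]].
    split; auto. split; auto. tauto. }
  destruct (Hag _ Hsb) as [E1 _]. destruct (Hag _ Hba) as [_ E2]. rewrite E1, E2. tauto.
Qed.

Lemma flagx_local Wi Wi' Wj Wj' d al l : full_record k Wi -> full_record k Wi' ->
  (forall x, lt x al -> Wi x = Wi' x /\ Wj x = Wj' x) -> lt l al ->
  (flagx Wi Wj d l <-> flagx Wi' Wj' d l).
Proof.
  intros H1 H2 Hag Hl. destruct (classic (is_limit k l)) as [HL|HL]; [|unfold flagx; tauto].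
  unfold flagx. rewrite (gam_local k Wi Wi' d l H1 H2 HL).
  rewrite (lpar_local k Wj Wj' l). rewrite (proj1 (Hag l Hl)). tauto.
  intros b Hb; apply Hag; apply (ltT k _ l); auto.
  intros s Hs; apply Hag; apply (ltT k _ l); auto.
Qed.

Lemma flagy_local Wi Wi' Wj Wj' d al l : full_record k Wi -> full_record k Wi' ->
  (forall x, lt x al -> Wi x = Wi' x /\ Wj x = Wj' x) -> lt l al ->
  (flagy Wi Wj d l <-> flagy Wi' Wj' d l).
Proof.
  intros H1 H2 Hag Hl. unfold flagy. rewrite (flagx_local Wi Wi' Wj Wj' d al l); auto.
  rewrite (proj1 (Hag l Hl)). tauto.
Qed.

Lemma main_thm :
  exists T : Wk k -> (Wk k -> Prop) -> R,
    (forall w : Wk k,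
       fa_prob (T w) /\
       (forall u, Pinfo i w u -> T u = T w) /\
       T w (Pinfo i w) = 1 /\
       T w (fun u => w0 u = w0 w) = (if wpl i w (ozero k) then 1 else / 2) /\
       (forall be : k,
          T w (fun u => wpl (other i) u be = wpl (other i) w be)
          = (if wpl i w (osucc k be) then 1 else / 2)) /\
       (forall l : k, is_limit k l ->
          T w (fun u => lpar_even k (wpl (other i) u) l <-> lpar_even k (wpl (other i) w) l)
          = (if wpl i w l then 1 else / 2))) /\
    (forall (al : k) (u w : Wk k) (E : coin -> Prop),
       olt k (ozero k) al -> restr al u = restr al w ->
       T u (fun x => E (w0 x)) = T w (fun x => E (w0 x))) /\
    (forall (be al : k) (u w : Wk k) (E : Wsub k be -> Prop),
       ~ is_zero k be -> olt k be al -> restr al u = restr al w ->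
       T u (fun x => E (restr be x)) = T w (fun x => E (restr be x))).
Proof.
  exists T. split; [intros w|split].
  - split; [|split; [|split; [|split; [|split]]]].
    +
      split; [|split].
      * intros A. unfold T. destruct (I_01 (fun d => A (X w d))) as [E1|E1]; rewrite E1;
        destruct (I_01 (fun d => A (Y w d))) as [E2|E2]; rewrite E2; lra.
      * unfold T. rewrite !I_true; auto. lra.
      * intros A B HAB. unfold T.
        rewrite (I_add (fun d => A (X w d)) (fun d => B (X w d))) by (intros d; apply HAB).
        rewrite (I_add (fun d => A (Y w d)) (fun d => B (Y w d))) by (intros d; apply HAB). lra.
    +
      intros u HP. apply functional_extensionality; intros A. unfold T.
      assert (HX : X u = X w) by (apply functional_extensionality; intros d; apply X_inv; auto).
      assert (HY : Y u = Y w) by (apply functional_extensionality; intros d; apply Y_inv; auto).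
      rewrite HX, HY. reflexivity.
    +
      unfold T. rewrite !I_true. lra. apply Y_P. apply X_P.
    +
      unfold T; cbv beta. destruct (wpl i w (ozero k)) eqn:E.
      * rewrite !I_true. lra. intros d; rewrite Y_0, E; auto. intros d; rewrite X_0, E; auto.
      * assert (I (fun d => w0 (X w d) = w0 w) + I (fun d => w0 (Y w d) = w0 w) = 1); [|lra].
        apply (I_compl (fun _ => True)). apply UT. intros d _. rewrite X_0, Y_0, E.
        destruct (w0 w); split; intros; try congruence; try discriminate; intro Hc; discriminate.
    +
      intros be. unfold T; cbv beta. destruct (wpl i w (sc be)) eqn:E.
      * rewrite !I_true. lra.
        intros d; rewrite Y_j; apply (Vknown k _ d (wrec i w)); auto.
        intros d; rewrite X_j; apply (Vknown k _ d (wrec i w)); auto.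
      * assert (I (fun d => wpl (other i) (X w d) be = wpl (other i) w be) +
                I (fun d => wpl (other i) (Y w d) be = wpl (other i) w be) = 1); [|lra].
        apply (I_compl (fun d => In be d)). apply Uin. intros d Hd.
        rewrite X_j, Y_j, (Vind k _ d (wrec i w)), (Vind k _ d (wrec i w)); auto.
        destruct (wpl (other i) w be); split; intros; try congruence; try discriminate; intro Hc; discriminate.
    +
      intros l Hl. unfold T; cbv beta. destruct (wpl i w l) eqn:E.
      * rewrite !I_true. lra.
        intros d. destruct (P_unf w _ (Y_P w d)) as [_ [_ [_ H4]]]. apply H4; auto.
        intros d. destruct (P_unf w _ (X_P w d)) as [_ [_ [_ H4]]]. apply H4; auto.
      * match goal with |- / 2 * I ?A + / 2 * I ?B = _ => assert (I A + I B = 1); [|lra] end.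
        apply (I_compl (fun d => In l d)). apply Uin. intros d Hd.
        assert (Hr : rel k (wpl i w) d l) by (split; auto).
        rewrite X_j, Y_j, (Vpar k _ d (wrec i w) _ _ _ l Hr), (Vpar k _ d (wrec i w) _ _ _ l Hr).
        assert (Fx : ~ flagx (wpl i w) (wpl (other i) w) d l) by (intros [_ [A _]]; congruence).
        assert (Fy : flagy (wpl i w) (wpl (other i) w) d l) by (right; auto).
        rewrite (even_succ k (sc (gam k (wpl i w) d l))).
        destruct (classic (even_ord k (sc (gam k (wpl i w) d l))));
        destruct (classic (lpar_even k (wpl (other i) w) l)); tauto.
  -
    intros al u w E H0 Hr. destruct (restr_eq al u w Hr) as [Hc Hp].
    unfold T. cbv beta.
    assert (Hz : wpl i u (ozero k) = wpl i w (ozero k)) by (apply Hp; auto).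
    rewrite (I_congr (fun _ => True) (fun d => E (w0 (X u d))) (fun d => E (w0 (X w d)))).
    rewrite (I_congr (fun _ => True) (fun d => E (w0 (Y u d))) (fun d => E (w0 (Y w d)))).
    reflexivity.
    apply UT. intros d _. rewrite !Y_0, Hz, Hc. tauto.
    apply UT. intros d _. rewrite !X_0, Hz, Hc. tauto.
  -
    intros be al u w E Hnz Hba Hr. destruct (restr_eq al u w Hr) as [Hc Hp].
    assert (Hag : forall x, lt x al -> wpl i u x = wpl i w x /\ wpl (other i) u x = wpl (other i) w x)
      by (intros; split; apply Hp; auto).
    assert (H0 : lt (ozero k) al) by (apply (le_lt k _ be); auto; apply zero_spec).
    assert (Hz : wpl i u (ozero k) = wpl i w (ozero k)) by (apply Hp; auto).
    unfold T. cbv beta.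
    rewrite (I_congr (fun d => In be d) (fun d => E (restr be (X u d))) (fun d => E (restr be (X w d)))).
    rewrite (I_congr (fun d => In be d) (fun d => E (restr be (Y u d))) (fun d => E (restr be (Y w d)))).
    reflexivity.
    + apply Uin.
    + intros d Hd. rewrite (restr_ext be (Y u d) (Y w d)). tauto.
      rewrite !Y_0, Hz, Hc; auto.
      intros p b Hb. assert (Hb' : lt b al) by (apply (ltT k _ be); auto).
      destruct (player_cases p) as [->| ->].
      * rewrite !Y_i. apply Hp; auto.
      * rewrite !Y_j. apply gfun_local with al be; auto; try apply wrec.
        intros l Hl Hll. apply flagy_local with al; auto; try apply wrec. apply (le_lt k _ be); auto.
    + apply Uin.
    + intros d Hd. rewrite (restr_ext be (X u d) (X w d)). tauto.
      rewrite !X_0, Hz, Hc; auto.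
      intros p b Hb. assert (Hb' : lt b al) by (apply (ltT k _ be); auto).
      destruct (player_cases p) as [->| ->].
      * rewrite !X_i. apply Hp; auto.
      * rewrite !X_j. apply gfun_local with al be; auto; try apply wrec.
        intros l Hl Hll. apply flagx_local with al; auto; try apply wrec. apply (le_lt k _ be); auto.
Qed.

End Main.

Module UFmod.
From mathcomp Require Import all_boot classical_sets boolp filter.
Lemma UF_exists (A : Type) : exists U : (list A -> Prop) -> Prop,
  (forall P Q, U P -> U Q -> U (fun d => P d /\ Q d)) /\
  (forall P Q : list A -> Prop, (forall d, P d -> Q d) -> U P -> U Q) /\
  ~ U (fun _ => False) /\
  (forall P, U P \/ U (fun d => ~ P d)) /\
  (forall x, U (fun d => List.In x d)).
Proof.
pose B := fun l : list A => (fun d : list A => forall x, List.In x l -> List.In x d).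
have FF : Filter (filter_from setT B).
  apply: filter_fromT_filter; first by exists nil.
  move=> l1 l2; exists (l1 ++ l2) => d Hd; split => x Hx; apply: Hd;
  apply List.in_or_app; tauto.
have PF : ProperFilter (filter_from setT B).
  apply: filter_from_proper => l _; exists l => x; done.
have [G [UG sFG]] := ultraFilterLemma PF.
exists G; split; [|split; [|split; [|split]]].
- move=> P Q HP HQ; exact: (@filterI _ _ _ P Q HP HQ).
- move=> P Q HPQ HP; exact: (@filterS _ _ _ P Q HPQ HP).
- move=> H; exact: (@filter_not_empty _ G _ H).
- move=> P; exact: (in_ultra_setVsetC P UG).
- move=> x; apply: sFG; exists (x :: nil); first by []. by move=> d Hd; apply: Hd; left.
Qed.
End UFmod.

Theorem theorem2 (k : RegCard) (i : player) :
  exists T : Wk k -> (Wk k -> Prop) -> R,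
    (forall w : Wk k,
       fa_prob (T w) /\
       (* (a) *)
       (forall u, Pinfo i w u -> T u = T w) /\
       (* (b) *)
       T w (Pinfo i w) = 1 /\
       (* (c) *)
       T w (fun u => w0 u = w0 w) = (if wpl i w (ozero k) then 1 else / 2) /\
       (* (d) *)
       (forall be : k,
          T w (fun u => wpl (other i) u be = wpl (other i) w be)
          = (if wpl i w (osucc k be) then 1 else / 2)) /\
       (* (e) *)
       (forall l : k, is_limit k l ->
          T w (fun u => lpar_even k (wpl (other i) u) l <-> lpar_even k (wpl (other i) w) l)
          = (if wpl i w l then 1 else / 2))) /\
    (* (f), case beta = 0 : W^0 = {h,t}, pi_{0,kappa} u = u_0 *)
    (forall (al : k) (u w : Wk k) (E : coin -> Prop),
       olt k (ozero k) al -> restr al u = restr al w ->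
       T u (fun x => E (w0 x)) = T w (fun x => E (w0 x))) /\
    (* (f), case 0 < beta < alpha < kappa *)
    (forall (be al : k) (u w : Wk k) (E : Wsub k be -> Prop),
       ~ is_zero k be -> olt k be al -> restr al u = restr al w ->
       T u (fun x => E (restr be x)) = T w (fun x => E (restr be x))).
Proof.
  destruct (UFmod.UF_exists (ord k)) as [U [HI [HS [H0 [Hu Hin]]]]].
  exact (main_thm k i U HI HS H0 Hu Hin).
Qed.
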